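(* Assume that $\mathsf U_k^n\in\mathcal B(b)$ for every $k\in\mathcal V$. Let $i\in\mathcal V$, $j\in\mathcal I(i)$, and let $\gamma_{ij}\in[1,\min(\gamma_i^n,\gamma_j^n)]$. Define, for $\mathbf u\in\mathcal B(b)$, $$\Psi_{ij}(\mathbf u):=\rho e(\mathbf u)-S_{ij}^{\min}\,\rho^{\gamma_{ij}}(1-b\rho)^{1-\gamma_{ij}},\qquad S_{ij}^{\min}:=\min\big(S(\mathsf U_i^n,\gamma_{ij}),S(\mathsf U_j^n,\gamma_{ij})\big).$$ Consider the extended Riemann problem with left data $(\varrho_i^n,\mathsf M_i^n\cdot\mathbf n_{ij},\mathcal E_i^n,\Gamma_i^n)^{\mathsf T}$ and right data $(\varrho_j^n,\mathsf M_j^n\cdot\mathbf n_{ij},\mathcal E_j^n,\Gamma_j^n)^{\mathsf T}$. Then $\Psi_{ij}$ (evaluated on the states of the Riemann solution) increases across shocks in the solution of this extended Riemann problem, if a shock wave exists, i.e. from the pre-shock state to the post-shock state.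
   Context: Let $d\ge1$ and $b\ge0$. For $\mathbf u=(\rho,\mathbf m,E)\in\mathbb R^{d+2}$ with $\rho>0$ set $e(\mathbf u)=\rho^{-1}E-\tfrac12\|\mathbf m/\rho\|^2$. The admissible set is $\mathcal B(b)=\{\mathbf u=(\rho,\mathbf m,E): \rho>0,\ 1-b\rho>0,\ e(\mathbf u)>0\}$. A pressure ''oracle'' $p:\mathcal B(b)\to[0,\infty)$ is an arbitrary given function. $\mathcal V$ is a finite index set; for each $i\in\mathcal V$, $\mathcal I(i)\subset\mathcal V$ is a set containing $i$, and vectors $\mathbf c_{ij}\in\mathbb R^d$ (nonzero for $j\ne i$) are given with $\mathbf n_{ij}:=\mathbf c_{ij}/\|\mathbf c_{ij}\|$. States $\mathsf U_k^n=(\varrho_k^n,\mathsf M_k^n,\mathsf E_k^n)$ are given. For $Z\in\{i,j\}$: $\mathsf p_Z^n=p(\mathsf U_Z^n)$, $\mathsf e_Z^n=e(\mathsf U_Z^n)$, $\gamma_Z^n:=1+\frac{\mathsf p_Z^n(1-b\varrho_Z^n)}{\varrho_Z^n\mathsf e_Z^n}$, $\Gamma_Z^n:=\varrho_Z^n\gamma_Z^n$, and $\mathcal E_Z^n:=\mathsf E_Z^n-\frac{\|\mathsf M_Z^n-(\mathsf M_Z^n\cdot\mathbf n_{ij})\mathbf n_{ij}\|^2}{2\varrho_Z^n}$. For $\mathbf u\in\mathcal B(b)$ and $\gamma\ge1$, $S(\mathbf u,\gamma):=\frac{\rho e(\mathbf u)}{\rho^\gamma}(1-b\rho)^{\gamma-1}$.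 The extended Riemann problem is the one-dimensional system in $(x,t)$ $$\partial_t(\rho,m,\mathcal E,\Gamma)^{\mathsf T}+\partial_x\Big(m,\ \tfrac{m^2}{\rho}+p_{\rm cov},\ \tfrac m\rho(\mathcal E+p_{\rm cov}),\ \tfrac m\rho\Gamma\Big)^{\mathsf T}=0,\qquad p_{\rm cov}=\frac{\Gamma/\rho-1}{1-b\rho}\Big(\mathcal E-\frac{m^2}{2\rho}\Big),$$ with the left data for $x<0$ and right data for $x>0$ at $t=0$. A state $(\rho,m,\mathcal E,\Gamma)$ of this problem is identified with a state having density $\rho$ and internal energy density $\rho e=\mathcal E-\frac{m^2}{2\rho}$ when evaluating $\Psi_{ij}$. *)

(* Defs.v *)
From HB Require Import structures.
From mathcomp Require Import all_boot all_order all_algebra.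
From mathcomp Require Import all_classical all_reals all_analysis.
Set Implicit Arguments. Unset Strict Implicit. Unset Printing Implicit Defensive.
Import Order.TTheory GRing.Theory Num.Theory.
Local Open Scope ring_scope.

Section Defs.
Variables (R : realType) (d : nat).

Definition dotv (u v : 'rV[R]_d) : R := \sum_(k < d) u 0 k * v 0 k.
Definition normv (u : 'rV[R]_d) : R := Num.sqrt (dotv u u).

Definition e_int (rho : R) (m : 'rV[R]_d) (E : R) : R :=
  E / rho - 2^-1 * dotv (rho^-1 *: m) (rho^-1 *: m).

Definition inB (b rho : R) (m : 'rV[R]_d) (E : R) : Prop :=
  [/\ 0 < rho, 0 < 1 - b * rho & 0 < e_int rho m E].

Definition S_dens (b rho rhoe g : R) : R :=
  rhoe / (rho `^ g) * ((1 - b * rho) `^ (g - 1)).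

Definition S_st (b rho : R) (m : 'rV[R]_d) (E g : R) : R :=
  S_dens b rho (rho * e_int rho m E) g.

Definition gamma_st (p : R -> 'rV[R]_d -> R -> R) (b rho : R) (m : 'rV[R]_d) (E : R) : R :=
  1 + p rho m E * (1 - b * rho) / (rho * e_int rho m E).

Definition unitv (c : 'rV[R]_d) : 'rV[R]_d := (normv c)^-1 *: c.

Definition calE (rho : R) (M : 'rV[R]_d) (E : R) (n : 'rV[R]_d) : R :=
  E - (normv (M - dotv M n *: n)) ^+ 2 / (2 * rho).

End Defs.

(* States (rho, m, calE, Gamma) of the one-dimensional extended Riemann problem *)
Record st1 (R : Type) := St1 { s_rho : R; s_m : R; s_E : R; s_G : R }.

Section OneD.
Variable (R : realType).
Implicit Types (s : st1 R) (b sigma : R).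

Definition rhoe1 s : R := s_E s - (s_m s) ^+ 2 / (2 * s_rho s).

Definition inB1 b s : Prop :=
  [/\ 0 < s_rho s, 0 < 1 - b * s_rho s & 0 < rhoe1 s].

Definition pcov b s : R :=
  (s_G s / s_rho s - 1) / (1 - b * s_rho s) * rhoe1 s.

Definition flux_rho s : R := s_m s.
Definition flux_m b s : R := (s_m s) ^+ 2 / s_rho s + pcov b s.
Definition flux_E b s : R := s_m s / s_rho s * (s_E s + pcov b s).
Definition flux_G s : R := s_m s / s_rho s * s_G s.

Definition RH b (sl sr : st1 R) sigma : Prop :=
  [/\ flux_rho sr - flux_rho sl = sigma * (s_rho sr - s_rho sl),
      flux_m b sr - flux_m b sl = sigma * (s_m sr - s_m sl),
      flux_E b sr - flux_E b sl = sigma * (s_E sr - s_E sl) &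
      flux_G sr - flux_G sl = sigma * (s_G sr - s_G sl)].

(* velocity and sound speed of the covolume EOS with gamma = Gamma/rho:
   c^2 = gamma p_cov / (rho (1 - b rho)); eigenvalues u - c, u, u, u + c *)
Definition vel1 s : R := s_m s / s_rho s.
Definition sound1 b s : R :=
  Num.sqrt (s_G s / s_rho s * pcov b s / (s_rho s * (1 - b * s_rho s))).
Definition lam1 b s : R := vel1 s - sound1 b s.
Definition lam3 b s : R := vel1 s + sound1 b s.

Definition lax1 b (sl sr : st1 R) sigma : Prop :=
  [/\ lam1 b sr < sigma, sigma < lam1 b sl & sigma < vel1 sr].

Definition lax3 b (sl sr : st1 R) sigma : Prop :=
  [/\ lam3 b sr < sigma, sigma < lam3 b sl & vel1 sl < sigma].

Definition Psi1 b (Smin g : R) s : R :=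
  rhoe1 s - Smin * (s_rho s `^ g) * ((1 - b * s_rho s) `^ (1 - g)).

End OneD.

(* Main.v *)
Require Import Defs.
From HB Require Import structures.
From mathcomp Require Import all_boot all_order all_algebra.
From mathcomp Require Import all_classical all_reals all_analysis.
From mathcomp Require Import ring lra.
Import Order.TTheory GRing.Theory Num.Theory.
Local Open Scope ring_scope.

Section A.
Variable R : realType.

Lemma dlin (a k t : R) : is_derive t 1 (fun s : R => a + k * s) k.
Proof.
have H : is_derive t (1:R) (cst a + k \*: id) (0 + k *: (1:R)) by apply: is_deriveD.
have E : (fun s : R => a + k * s) = cst a + k \*: id by apply: funext.
rewrite E; rewrite add0r in H. move: H; congr is_derive; exact: mulr1.
Qed.

Lemma dln (a k t : R) : 0 < a + k * t ->
  is_derive t 1 (fun s : R => ln (a + k * s)) ((a + k * t)^-1 * k).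
Proof.
move=> h. have H1 := is_derive1_ln h. have H2 := dlin a k t.
exact: (@is_derive1_comp R (@ln R) (fun s : R => a + k * s) t _ _ H1 H2).
Qed.

Lemma dadd (f g : R -> R) (x df dg : R) : is_derive x 1 f df -> is_derive x 1 g dg ->
  is_derive x 1 (fun s => f s + g s) (df + dg).
Proof. move=> H1 H2. exact: (@is_deriveD R R R f g x 1 df dg H1 H2). Qed.

Lemma dscal (f : R -> R) (k x df : R) : is_derive x 1 f df ->
  is_derive x 1 (fun s => k * f s) (k * df).
Proof. move=> H1. exact: (@is_deriveZ R R R f k x 1 df H1). Qed.

Definition FF (g s : R) := g * ln (1 + (-1) * s) + (- g) * ln (1 + 1 * s)
   + ((-1) * ln (1 + (- g) * s) + ln (1 + g * s)).

Definition FFd (g t : R) := (g * ((1 + (-1) * t)^-1 * (-1)) + (- g) * ((1 + 1 * t)^-1 * 1)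
    + ((-1) * ((1 + (- g) * t)^-1 * (- g)) + (1 + g * t)^-1 * g)).

Lemma FF_der (g t : R) : 1 <= g -> 0 <= t -> g * t < 1 ->
  is_derive t 1 (FF g) (FFd g t).
Proof.
move=> g1 t0 gt1.
have t1 : t < 1 by apply: (le_lt_trans _ gt1); rewrite -[t in t <= _]mul1r ler_wpM2r.
apply: dadd; apply: dadd; try apply: dscal; apply: dln.
- lra.
- lra.
- lra.
- have : 0 <= g * t by apply: mulr_ge0 => //; lra.
  lra.
Qed.

Lemma key {g z : R} : 1 <= g -> 0 <= z -> g * z < 1 ->
  0 <= FF g z.
Proof.
move=> g1 z0 gz1.
have F0 : FF g 0 = 0 by rewrite /FF !mulr0 !addr0 ln1 !mulr0 !addr0.
rewrite -F0.
have Hd : forall t, 0 <= t <= z -> is_derive t 1 (FF g) (FFd g t).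
  move=> t /andP[t0 tz]. apply: FF_der => //.
  apply: le_lt_trans gz1. apply: ler_wpM2l => //. lra.
apply: (@ger0_derive1_ndecr R (FF g) 0 z) => //.
- move=> x; rewrite in_itv /= => /andP[x0 xz].
  have [H _] := Hd x ltac:(apply/andP; split; apply: ltW => //).
  exact: H.
- move=> x; rewrite in_itv /= => /andP[x0 xz].
  have Hx := Hd x ltac:(apply/andP; split; apply: ltW => //).
  rewrite derive1E (@derive_val _ _ _ _ _ _ _ Hx).
  have gx : g * x < 1 by apply: le_lt_trans gz1; apply: ler_wpM2l; lra.
  have x1 : x < 1 by apply: (le_lt_trans _ gx); rewrite -[x in x <= _]mul1r ler_wpM2r //; lra.
  have gx0 : 0 <= g * x by apply: mulr_ge0; lra.
  have E : FFd g x = 2 * g * ((g ^+ 2 - 1) * x ^+ 2) / ((1 - x ^+ 2) * (1 - (g * x) ^+ 2)).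
    rewrite /FFd; field.
    rewrite !expr2; repeat (apply/andP; split); apply/eqP => H; nra.
  rewrite E; apply: divr_ge0.
  + apply: mulr_ge0; first lra. apply: mulr_ge0; last exact: sqr_ge0.
    have : 1 <= g ^+ 2 by rewrite -[1](mulr1 1) expr2; apply: ler_pM; lra.
    lra.
  + apply: mulr_ge0; rewrite subr_ge0; rewrite -[1](mulr1 1) expr2; apply: ler_pM; lra.
- have := @continuous_in_subspaceT _ _ `[0, z]%classic (FF g). move=> HH; apply: HH => x; rewrite inE /= in_itv /= => /andP[x0 xz].
  apply: differentiable_continuous; apply/derivable1_diffP.
  have [H _] := Hd x ltac:(apply/andP; split => //).
  exact: H.
Qed.

Lemma powkey {g vs vL : R} : 1 <= g -> 0 < vs -> vs <= vL ->
  ((g + 1) * vs - (g - 1) * vL) * vL `^ g <= ((g + 1) * vL - (g - 1) * vs) * vs `^ g.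
Proof.
move=> g1 vs0 vsL.
have vL0 : 0 < vL by lra.
have B0 : 0 < (g + 1) * vL - (g - 1) * vs.
  have : (g - 1) * vs <= (g - 1) * vL by apply: ler_wpM2l; lra.
  nra.
have [D0|D0] := leP ((g + 1) * vs - (g - 1) * vL) 0.
  apply: (le_trans (y := 0)).
    by apply: mulr_le0_ge0 => //; exact: powR_ge0.
  by apply: mulr_ge0; [lra | exact: powR_ge0].
set D := (g + 1) * vs - (g - 1) * vL in D0 *.
set B := (g + 1) * vL - (g - 1) * vs in B0 *.
set z := (vL - vs) / (vL + vs).
have S0 : 0 < vL + vs by lra.
have z0 : 0 <= z by apply: divr_ge0; lra.
have e1 : 1 + (-1) * z = 2 * vs / (vL + vs) by rewrite /z; field; lra.
have e2 : 1 + 1 * z = 2 * vL / (vL + vs) by rewrite /z; field; lra.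
have e3 : 1 + (- g) * z = D / (vL + vs) by rewrite /z /D; field; lra.
have e4 : 1 + g * z = B / (vL + vs) by rewrite /z /B; field; lra.
have gz : g * z < 1.
  have : 0 < 1 + (- g) * z by rewrite e3; apply: divr_gt0.
  lra.
have K := key g1 z0 gz.
rewrite /FF e1 e2 e3 e4 in K.
have P1 : 0 < 2 * vs / (vL + vs) by apply: divr_gt0; lra.
have P2 : 0 < 2 * vL / (vL + vs) by apply: divr_gt0; lra.
have P3 : 0 < D / (vL + vs) by apply: divr_gt0.
have P4 : 0 < B / (vL + vs) by apply: divr_gt0.
have L1 : ln (2 * vs / (vL + vs)) - ln (2 * vL / (vL + vs)) = ln vs - ln vL.
  rewrite -ln_div ?posrE // -ln_div ?posrE //.
  congr ln; field; lra.
have L2 : ln (B / (vL + vs)) - ln (D / (vL + vs)) = ln B - ln D.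
  rewrite -ln_div ?posrE // -ln_div ?posrE //.
  congr ln; field; lra.
have K2 : ln D + g * ln vL <= ln B + g * ln vs.
  have : 0 <= g * (ln vs - ln vL) + (ln B - ln D).
    rewrite -L1 -L2. move: K. lra.
  lra.
rewrite -ler_ln ?posrE; last first.
- apply: mulr_gt0 => //; exact: powR_gt0.
- apply: mulr_gt0 => //; exact: powR_gt0.
rewrite !lnM ?posrE ?powR_gt0 // !ln_powR.
exact: K2.
Qed.

Lemma shock_alg (g vL vs eL es J : R) : 1 <= g -> 0 < vL -> 0 < vs -> 0 < eL -> 0 < es ->
  0 <= J ->
  (g - 1) * es / vs - (g - 1) * eL / vL = J * (vL - vs) ->
  es - eL + ((g - 1) * es / vs + (g - 1) * eL / vL) / 2 * (vs - vL) = 0 ->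
  g * ((g - 1) * eL / vL) < J * vL ->
  J * vs < g * ((g - 1) * es / vs) ->
  vs < vL /\ eL * vL `^ (g - 1) <= es * vs `^ (g - 1).
Proof.
move=> g1 vL0 vs0 eL0 es0 J0 Mom Hug La Lb.
set pL := (g - 1) * eL / vL in Mom Hug La.
set ps := (g - 1) * es / vs in Mom Hug Lb.
have pL0 : 0 <= pL by rewrite /pL; apply: divr_ge0; [apply: mulr_ge0; lra | lra].
have ps0 : 0 <= ps by rewrite /ps; apply: divr_ge0; [apply: mulr_ge0; lra | lra].
have vsL : vs < vL.
  rewrite ltNge; apply/negP => H.
  have h1 : J * (vL - vs) <= 0 by apply: mulr_ge0_le0; lra.
  have h2 : g * ps <= g * pL by apply: ler_wpM2l; lra.
  have h3 : J * vL <= J * vs by apply: ler_wpM2l.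
  lra.
split => //.
have E : es * vL * ((g + 1) * vs - (g - 1) * vL) = eL * vs * ((g + 1) * vL - (g - 1) * vs).
  have H2 : (es - eL + (ps + pL) / 2 * (vs - vL)) * (2 * vs * vL) = 0 by rewrite Hug mul0r.
  rewrite /ps /pL in H2.
  have H3 : es * vL * ((g + 1) * vs - (g - 1) * vL) - eL * vs * ((g + 1) * vL - (g - 1) * vs)
     = (es - eL + ((g - 1) * es / vs + (g - 1) * eL / vL) / 2 * (vs - vL)) * (2 * vs * vL).
    field; apply/andP; split; apply/eqP => H; lra.
  apply/eqP; rewrite -subr_eq0; apply/eqP; rewrite H3; exact: H2.
have B0 : 0 < (g + 1) * vL - (g - 1) * vs.
  have : (g - 1) * vs <= (g - 1) * vL by apply: ler_wpM2l; lra.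
  nra.
have D0 : 0 < (g + 1) * vs - (g - 1) * vL.
  have : 0 < eL * vs * ((g + 1) * vL - (g - 1) * vs) by apply: mulr_gt0 => //; apply: mulr_gt0.
  rewrite -E => H.
  have : 0 < es * vL by apply: mulr_gt0.
  move=> H1; rewrite -(pmulr_rgt0 _ H1); exact: H.
have PK := powkey g1 vs0 (ltW vsL).
rewrite -(mulr_powRB1 (ltW vL0)) ?(lt_le_trans _ g1) // in PK.
rewrite -(mulr_powRB1 (ltW vs0)) ?(lt_le_trans _ g1) // in PK.
set a := vs `^ (g - 1) in PK *.
set c := vL `^ (g - 1) in PK *.
set D := (g + 1) * vs - (g - 1) * vL in E D0 PK.
set B := (g + 1) * vL - (g - 1) * vs in E B0 PK.
have H : (es * a - eL * c) * (vL * D * vs) = eL * vs * (B * (vs * a) - D * (vL * c)).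
  have H' : (es * a - eL * c) * (vL * D * vs) = (es * vL * D) * vs * a - eL * c * vL * D * vs by ring.
  rewrite H' E; ring.
have H0 : 0 <= (es * a - eL * c) * (vL * D * vs).
  rewrite H; apply: mulr_ge0; first by apply: mulr_ge0; lra.
  lra.
rewrite pmulr_lge0 in H0; first lra.
by apply: mulr_gt0 => //; apply: mulr_gt0.
Qed.
End A.

Section C.
Variable R : realType.

Lemma powRD' (x a c : R) : 0 < x -> x `^ (a + c) = x `^ a * x `^ c.
Proof. move=> x0; rewrite powRD //; apply/implyP => _; exact: lt0r_neq0. Qed.

Lemma h1 (b r g : R) : 0 < r -> 0 < 1 - b * r ->
  r `^ g * (1 - b * r) `^ (1 - g) = r * (((1 - b * r) / r) `^ (g - 1))^-1.
Proof.
move=> r0 v0.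
set v := (1 - b * r) / r.
have vp : 0 < v by apply: divr_gt0.
have E : 1 - b * r = r * v by rewrite /v; field; exact: lt0r_neq0.
rewrite E powRM; [|exact: ltW|exact: ltW].
rewrite mulrA -powRD' // addrC subrK powRr1; last exact: ltW.
have -> : 1 - g = - (g - 1) by ring.
by rewrite powRN.
Qed.

Lemma h2 (b r g ep : R) : 0 < r -> 0 < 1 - b * r -> 0 < g ->
  S_dens b r ep g = ep / r * ((1 - b * r) / r) `^ (g - 1).
Proof.
move=> r0 v0 g0.
rewrite /S_dens.
set v := (1 - b * r) / r.
have vp : 0 < v by apply: divr_gt0.
have E : 1 - b * r = r * v by rewrite /v; field; exact: lt0r_neq0.
rewrite E powRM; [|exact: ltW|exact: ltW].
rewrite -(mulr_powRB1 (ltW r0) g0).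
have : 0 < r `^ (g - 1) by apply: powR_gt0.
move=> P; field; apply/andP; split; exact: lt0r_neq0.
Qed.

Lemma psi_mono (b g gam Smin rL rs epL eps : R) : 1 <= g -> g <= gam ->
  0 < rL -> 0 < rs -> 0 < 1 - b * rL -> 0 < 1 - b * rs -> 0 < epL -> 0 < eps ->
  (1 - b * rs) / rs < (1 - b * rL) / rL ->
  epL / rL * ((1 - b * rL) / rL) `^ (gam - 1) <= eps / rs * ((1 - b * rs) / rs) `^ (gam - 1) ->
  Smin <= S_dens b rL epL g ->
  epL - Smin * rL `^ g * (1 - b * rL) `^ (1 - g) <=
  eps - Smin * rs `^ g * (1 - b * rs) `^ (1 - g).
Proof.
move=> g1 ggam rL0 rs0 vL0 vs0 eL0 es0 vsL Ent Sm.
have g0 : 0 < g by lra.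
rewrite -!mulrA !h1 // h2 // in Sm *.
set vL := (1 - b * rL) / rL in vsL Ent Sm *.
set vs := (1 - b * rs) / rs in vsL Ent Sm *.
have vLp : 0 < vL by apply: divr_gt0.
have vsp : 0 < vs by apply: divr_gt0.
have rLs : rL < rs.
  have e1 : vL = rL^-1 - b by rewrite /vL; field; exact: lt0r_neq0.
  have e2 : vs = rs^-1 - b by rewrite /vs; field; exact: lt0r_neq0.
  have H : rs^-1 < rL^-1 by lra.
  by rewrite -ltf_pV2 ?posrE.
have XLs : vs `^ (g - 1) <= vL `^ (g - 1).
  by rewrite ge0_ler_powR ?nnegrE; try lra; apply: ltW.
have YLs : vs `^ (gam - g) <= vL `^ (gam - g).
  by rewrite ge0_ler_powR ?nnegrE; try lra; apply: ltW.
have Zs : vs `^ (gam - 1) = vs `^ (g - 1) * vs `^ (gam - g).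
  by rewrite -powRD' //; congr powR; ring.
have ZL : vL `^ (gam - 1) = vL `^ (g - 1) * vL `^ (gam - g).
  by rewrite -powRD' //; congr powR; ring.
rewrite Zs ZL in Ent.
have XLp : 0 < vL `^ (g - 1) by apply: powR_gt0.
have Xsp : 0 < vs `^ (g - 1) by apply: powR_gt0.
have YLp : 0 < vL `^ (gam - g) by apply: powR_gt0.
have Ysp : 0 < vs `^ (gam - g) by apply: powR_gt0.
set XL := vL `^ (g - 1) in XLs XLp Ent Sm *.
set Xs := vs `^ (g - 1) in XLs Xsp Ent Sm *.
set YL := vL `^ (gam - g) in YLs YLp Ent.
set Ys := vs `^ (gam - g) in YLs Ysp Ent.
set SL := epL / rL * XL in Sm Ent.
set Ss := eps / rs * Xs in Ent.
have ELs : epL = rL * XL^-1 * SL by rewrite /SL; field; apply/andP; split; exact: lt0r_neq0.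
have Ess : eps = rs * Xs^-1 * Ss by rewrite /Ss; field; apply/andP; split; exact: lt0r_neq0.
have SLs : SL <= Ss.
  have h : SL * YL <= Ss * Ys by move: Ent; rewrite /SL /Ss !mulrA.
  have SL0 : 0 <= SL by rewrite /SL; apply: mulr_ge0; [apply: divr_ge0|]; lra.
  have : SL * Ys <= SL * YL by apply: ler_wpM2l.
  move=> h'; have : SL * Ys <= Ss * Ys by lra.
  by rewrite ler_pM2r.
have W : rL * XL^-1 <= rs * Xs^-1.
  apply: ler_pM; try lra.
  - by apply: ltW; rewrite invr_gt0.
  - by rewrite lef_pV2 ?posrE.
rewrite ELs Ess.
have -> : rL * XL^-1 * SL - Smin * (rL * XL^-1) = rL * XL^-1 * (SL - Smin) by ring.
have -> : rs * Xs^-1 * Ss - Smin * (rs * Xs^-1) = rs * Xs^-1 * (Ss - Smin) by ring.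
apply: ler_pM; try lra.
by apply: mulr_ge0; [lra| apply: ltW; rewrite invr_gt0].
Qed.

Lemma hug_alg (rL rs uL us sg epL eps pL ps j : R) : 0 < rL -> 0 < rs -> j != 0 ->
  us = sg + j / rs -> uL = sg + j / rL ->
  (rs * us) ^+ 2 / rs + ps - ((rL * uL) ^+ 2 / rL + pL) = sg * (rs * us - rL * uL) ->
  rs * us / rs * (eps + (rs * us) ^+ 2 / (2 * rs) + ps)
    - rL * uL / rL * (epL + (rL * uL) ^+ 2 / (2 * rL) + pL)
    = sg * (eps + (rs * us) ^+ 2 / (2 * rs) - (epL + (rL * uL) ^+ 2 / (2 * rL))) ->
  eps / rs - epL / rL + (ps + pL) / 2 * (rs^-1 - rL^-1) = 0 /\ ps - pL = j ^+ 2 * (rL^-1 - rs^-1).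
Proof.
move=> rL0 rs0 j0 usE uLE mom en.
move/eqP: mom; rewrite -subr_eq0 => /eqP mom.
move/eqP: en; rewrite -subr_eq0 => /eqP en.
rewrite usE uLE in mom en.
have rLn : rL != 0 by exact: lt0r_neq0.
have rsn : rs != 0 by exact: lt0r_neq0.
split.
  apply: (mulfI j0); rewrite mulr0.
  match type of en with ?A = 0 => match type of mom with ?B = 0 =>
    have E : j * (eps / rs - epL / rL + (ps + pL) / 2 * (rs^-1 - rL^-1)) =
      A - (sg + j * (rs^-1 + rL^-1) / 2) * B by field; apply/andP; split
  end end.
  by rewrite E en mom; ring.
apply/eqP; rewrite -subr_eq0; apply/eqP.
match type of mom with ?B = 0 =>
  have E : ps - pL - j ^+ 2 * (rL^-1 - rs^-1) = B by field; apply/andP; split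
end.
by rewrite E mom.
Qed.
End C.

Section D.
Variable R : realType.

Lemma lin1 (X Y A B c : R) : X - Y = c * (A - B) -> A = B -> X = Y.
Proof. move=> E AB; apply/eqP; rewrite -subr_eq0 E AB subrr mulr0 //. Qed.

Lemma shock1 (b g Smin : R) (L s : st1 R) (sigma : R) :
  inB1 b L -> inB1 b s -> 1 <= g -> g <= s_G L / s_rho L ->
  Smin <= S_dens b (s_rho L) (rhoe1 L) g ->
  RH b L s sigma -> lax1 b L s sigma ->
  Psi1 b Smin g L <= Psi1 b Smin g s.
Proof.
case: L => rL mL EL GL; case: s => rs ms Es Gs.
rewrite /inB1 /RH /lax1 /Psi1 /lam1 /vel1 /sound1 /flux_rho /flux_m /flux_E /flux_G /=.
move=> [rL0 vL0 eL0] [rs0 vs0 es0] g1 ggam Sm [R1 R2 R3 R4] [Lb La Lc].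
rewrite /pcov /rhoe1 /= in R2 R3 La Lb eL0 es0 Sm *.
set gam := GL / rL in ggam La R2 R3.
set epL := EL - mL ^+ 2 / (2 * rL) in eL0 Sm R2 R3 La *.
set eps := Es - ms ^+ 2 / (2 * rs) in es0 R2 R3 Lb *.
have rLn : rL != 0 by exact: lt0r_neq0.
have rsn : rs != 0 by exact: lt0r_neq0.
set uL := mL / rL in La.
set us := ms / rs in Lb Lc.
have mLE : mL = rL * uL by rewrite /uL; field.
have msE : ms = rs * us by rewrite /us; field.
have ELE : EL = epL + (rL * uL) ^+ 2 / (2 * rL) by rewrite /epL -mLE; ring.
have EsE : Es = eps + (rs * us) ^+ 2 / (2 * rs) by rewrite /eps -msE; ring.
set j := rs * (us - sigma).
have j0 : 0 < j by apply: mulr_gt0 => //; lra.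
have usE : us = sigma + j / rs by rewrite /j; field.
have jL : rL * (uL - sigma) = j.
  rewrite /j; move: R1; rewrite msE mLE => R1. lra.
have uLE : uL = sigma + j / rL by rewrite -jL; field.
have gs : Gs / rs = gam.
  move: R4; rewrite msE mLE -/us -/uL => R4.
  have H : Gs * (j / rs) = GL * (j / rL).
    apply: (@lin1 _ _ _ _ 1 _ R4). rewrite usE uLE. field. by apply/andP.
  rewrite /gam. apply: (mulfI (lt0r_neq0 j0)). rewrite mulrC -mulrA (mulrC rs^-1) H. by field.
rewrite gs in R2 R3 Lb.
set pL := (gam - 1) / (1 - b * rL) * epL in R2 R3 La.
set ps := (gam - 1) / (1 - b * rs) * eps in R2 R3 Lb.
rewrite ELE EsE msE mLE in R3. rewrite msE mLE in R2.
have [Hug Mom] := @hug_alg R _ _ _ _ _ _ _ _ _ _ rL0 rs0 (lt0r_neq0 j0) usE uLE R2 R3.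
have gam1 : 1 <= gam by lra.
have pL0 : 0 <= pL by apply: mulr_ge0 => //; [apply: divr_ge0; lra | lra].
have ps0 : 0 <= ps by apply: mulr_ge0 => //; [apply: divr_ge0; lra | lra].
set argL := gam * pL / (rL * (1 - b * rL)) in La.
have argL0 : 0 <= argL by apply: divr_ge0; [apply: mulr_ge0; lra | apply: mulr_ge0; lra].
have cL0 := sqrtr_ge0 argL.
have cL2 : Num.sqrt argL ^+ 2 = argL by rewrite sqr_sqrtr.
have wL2 : argL < (uL - sigma) ^+ 2.
  rewrite -cL2; rewrite ltr_pXn2r // ?nnegrE; lra.
set argS := gam * ps / (rs * (1 - b * rs)) in Lb.
have cS0 : 0 < Num.sqrt argS by lra.
have argS0 : 0 < argS by rewrite -sqrtr_gt0.
have cS2 : Num.sqrt argS ^+ 2 = argS by rewrite sqr_sqrtr // ltW.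
have wS2 : (us - sigma) ^+ 2 < argS.
  rewrite -cS2; rewrite ltr_pXn2r // ?nnegrE; lra.
have PL : 0 < rL * (1 - b * rL) by apply: mulr_gt0.
have PS : 0 < rs * (1 - b * rs) by apply: mulr_gt0.
have nz1 : 1 - b * rL != 0 by exact: lt0r_neq0.
have nz2 : 1 - b * rs != 0 by exact: lt0r_neq0.
have Mom' : (gam - 1) * (eps / rs) / ((1 - b * rs) / rs) - (gam - 1) * (epL / rL) / ((1 - b * rL) / rL)
   = j ^+ 2 * ((1 - b * rL) / rL - (1 - b * rs) / rs).
  apply: (@lin1 _ _ _ _ 1 _ Mom); rewrite /pL /ps; field.
  by rewrite nz1 nz2 rLn rsn.
have Hug' : eps / rs - epL / rL + ((gam - 1) * (eps / rs) / ((1 - b * rs) / rs) + (gam - 1) * (epL / rL) / ((1 - b * rL) / rL)) / 2 * ((1 - b * rs) / rs - (1 - b * rL) / rL) = 0.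
  apply: (@lin1 _ _ _ _ 1 _ Hug); rewrite /pL /ps; field.
  by rewrite nz1 nz2 rLn rsn.
have La' : gam * ((gam - 1) * (epL / rL) / ((1 - b * rL) / rL)) < j ^+ 2 * ((1 - b * rL) / rL).
  have e1 : gam * ((gam - 1) * (epL / rL) / ((1 - b * rL) / rL)) = rL * (1 - b * rL) * argL.
    rewrite /argL /pL; field. by rewrite nz1 rLn.
  have e2 : j ^+ 2 * ((1 - b * rL) / rL) = rL * (1 - b * rL) * (uL - sigma) ^+ 2.
    rewrite -jL; field. by rewrite rLn.
  by rewrite e1 e2 ltr_pM2l.
have Lb' : j ^+ 2 * ((1 - b * rs) / rs) < gam * ((gam - 1) * (eps / rs) / ((1 - b * rs) / rs)).
  have e1 : gam * ((gam - 1) * (eps / rs) / ((1 - b * rs) / rs)) = rs * (1 - b * rs) * argS.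
    rewrite /argS /ps; field. by rewrite nz2 rsn.
  have e2 : j ^+ 2 * ((1 - b * rs) / rs) = rs * (1 - b * rs) * (us - sigma) ^+ 2.
    rewrite /j; field. by rewrite rsn.
  by rewrite e1 e2 ltr_pM2l.
have [vsL Ent] := @shock_alg R gam _ _ (epL / rL) (eps / rs) (j ^+ 2) gam1
  (divr_gt0 vL0 rL0) (divr_gt0 vs0 rs0) (divr_gt0 eL0 rL0) (divr_gt0 es0 rs0) (sqr_ge0 j)
  Mom' Hug' La' Lb'.
exact: (@psi_mono R b g gam Smin rL rs epL eps g1 ggam rL0 rs0 vL0 vs0 eL0 es0 vsL Ent Sm).
Qed.

Lemma shock3 (b g Smin : R) (L s : st1 R) (sigma : R) :
  inB1 b L -> inB1 b s -> 1 <= g -> g <= s_G L / s_rho L ->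
  Smin <= S_dens b (s_rho L) (rhoe1 L) g ->
  RH b s L sigma -> lax3 b s L sigma ->
  Psi1 b Smin g L <= Psi1 b Smin g s.
Proof.
case: L => rL mL EL GL; case: s => rs ms Es Gs.
move=> iL iS g1 gg Sm HR HL.
have := @shock1 b g Smin (St1 rL (- mL) EL GL) (St1 rs (- ms) Es Gs) (- sigma).
rewrite /inB1 /Psi1 /rhoe1 /RH /lax1 /= !sqrrN.
apply => //.
- move: HR; rewrite /RH /flux_rho /flux_m /flux_E /flux_G /pcov /rhoe1 /= !sqrrN.
  case=> [R1 R2 R3 R4].
  have [rL0 vL0 _] := iL. have [rs0 vs0 _] := iS.
  have n1 := lt0r_neq0 rL0. have n2 := lt0r_neq0 rs0.
  have n3 := lt0r_neq0 vL0. have n4 := lt0r_neq0 vs0.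
  split.
  + apply: (@lin1 _ _ _ _ 1 _ R1). ring.
  + apply: (@lin1 _ _ _ _ (-1) _ R2). field. by rewrite n1 n2 n3 n4.
  + apply: (@lin1 _ _ _ _ 1 _ R3). field. by rewrite n1 n2 n3 n4.
  + apply: (@lin1 _ _ _ _ 1 _ R4). field. by rewrite n1 n2.
- move: HL; rewrite /lax3 /lam1 /lam3 /vel1 /sound1 /pcov /rhoe1 /= !sqrrN !mulNr.
  case=> [A B C]; split; lra.
Qed.
End D.

Section E.
Variables (R : realType) (d : nat).
Implicit Types (u v : 'rV[R]_d).

Lemma dotvZl (k : R) u v : dotv (k *: u) v = k * dotv u v.
Proof. rewrite /dotv mulr_sumr; apply: eq_bigr => i _; rewrite !mxE; ring. Qed.

Lemma dotvZr (k : R) u v : dotv u (k *: v) = k * dotv u v.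
Proof. rewrite /dotv mulr_sumr; apply: eq_bigr => i _; rewrite !mxE; ring. Qed.

Lemma dotv_ge0 u : 0 <= dotv u u.
Proof. rewrite /dotv; apply: sumr_ge0 => i _; rewrite -expr2; exact: sqr_ge0. Qed.

Lemma dotv_exp u v (a : R) :
  dotv (u - a *: v) (u - a *: v) = dotv u u - 2 * a * dotv u v + a ^+ 2 * dotv v v.
Proof.
rewrite /dotv !mulr_sumr -sumrB -big_split /=; apply: eq_bigr => i _; rewrite !mxE; ring.
Qed.

Lemma gen_calE (rho E : R) (M n : 'rV[R]_d) : 0 < rho ->
  (dotv M n) ^+ 2 * dotv n n = (dotv M n) ^+ 2 ->
  calE rho M E n - (dotv M n) ^+ 2 / (2 * rho) = rho * e_int rho M E.
Proof.
move=> r0 key.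
have rn := lt0r_neq0 r0.
rewrite /calE /e_int /normv sqr_sqrtr ?dotv_ge0 // dotv_exp dotvZl dotvZr.
move: key; set a := dotv M n; set nn := dotv n n => key.
have -> : E - (dotv M M - 2 * a * a + a ^+ 2 * nn) / (2 * rho) - a ^+ 2 / (2 * rho)
   = E - (dotv M M - 2 * a * a + a ^+ 2) / (2 * rho) - a ^+ 2 / (2 * rho) by rewrite key.
by field.
Qed.

Lemma rhoe1_calE (rho E : R) (M c : 'rV[R]_d) : 0 < rho ->
  calE rho M E (unitv c) - (dotv M (unitv c)) ^+ 2 / (2 * rho) = rho * e_int rho M E.
Proof.
move=> r0; apply: gen_calE => //.
rewrite /unitv !dotvZl !dotvZr /normv.
have [D0|D0] := eqVneq (dotv c c) 0.
  by rewrite D0 sqrtr0 invr0 !mul0r expr0n /= mul0r.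
have Dp : 0 < dotv c c by rewrite lt_def D0 dotv_ge0.
have sp : 0 < Num.sqrt (dotv c c) by rewrite sqrtr_gt0.
set s := Num.sqrt (dotv c c) in sp *.
have e : dotv c c = s ^+ 2 by rewrite sqr_sqrtr // dotv_ge0.
rewrite e; field; exact: lt0r_neq0.
Qed.
End E.

Theorem lemma4p1 (R : realType) (d : nat) (V : finType) (b : R)
  (p : R -> 'rV[R]_d -> R -> R) (I : V -> {set V}) (c : V -> V -> 'rV[R]_d)
  (rho : V -> R) (M : V -> 'rV[R]_d) (E : V -> R) (i j : V) (gij : R) :
  (0 < d)%N -> 0 <= b ->
  (forall r m en, inB b r m en -> 0 <= p r m en) ->
  (forall k, k \in I k) ->
  (forall k l, l \in I k -> l != k -> c k l != 0) ->
  (forall k, inB b (rho k) (M k) (E k)) ->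
  j \in I i ->
  let gam k := gamma_st p b (rho k) (M k) (E k) in
  1 <= gij -> gij <= Num.min (gam i) (gam j) ->
  let n := unitv (c i j) in
  let Smin := Num.min (S_st b (rho i) (M i) (E i) gij)
                      (S_st b (rho j) (M j) (E j) gij) in
  let UL := St1 (rho i) (dotv (M i) n) (calE (rho i) (M i) (E i) n) (rho i * gam i) in
  let UR := St1 (rho j) (dotv (M j) n) (calE (rho j) (M j) (E j) n) (rho j * gam j) in
  (* 1-shock: pre-shock state = left data UL, post-shock state = Us *)
  (forall (sigma : R) (Us : st1 R),
      inB1 b Us -> RH b UL Us sigma -> lax1 b UL Us sigma ->
      Psi1 b Smin gij UL <= Psi1 b Smin gij Us) /\
  (* 3-shock: pre-shock state = right data UR, post-shock state = Us *)
  (forall (sigma : R) (Us : st1 R),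
      inB1 b Us -> RH b Us UR sigma -> lax3 b Us UR sigma ->
      Psi1 b Smin gij UR <= Psi1 b Smin gij Us).
Proof.
move=> _ _ _ _ _ inBk _ gam g1 gmin n Smin UL UR.
move: gmin; rewrite le_min => /andP[gi gj].
have [ri0 vi0 ei0] := inBk i; have [rj0 vj0 ej0] := inBk j.
have eUL : rhoe1 UL = rho i * e_int (rho i) (M i) (E i) by apply: rhoe1_calE.
have eUR : rhoe1 UR = rho j * e_int (rho j) (M j) (E j) by apply: rhoe1_calE.
split.
- move=> sigma Us iS HR HL.
  apply: (@shock1 R b gij Smin UL Us sigma) => //.
  + by split => //; rewrite eUL; apply: mulr_gt0.
  + by rewrite /= mulrC mulKf // lt0r_neq0.
  + by rewrite eUL /Smin ge_min /S_st lexx.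
- move=> sigma Us iS HR HL.
  apply: (@shock3 R b gij Smin UR Us sigma) => //.
  + by split => //; rewrite eUR; apply: mulr_gt0.
  + by rewrite /= mulrC mulKf // lt0r_neq0.
  + by rewrite eUR /Smin ge_min /S_st lexx orbT.
Qed.
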